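(* Each formula $\Phi\in\mathtt{incl}$-$\mathtt{ESO}$-$\mathtt{HORN}$ is equivalent (i.e. $\langle w\rangle\models\Phi\iff\langle w\rangle\models\Phi'$ for all $w\in\Sigma^+$) to a formula $\Phi'=\exists\mathbf{R}'\forall x\forall y\,\psi'\in\mathtt{incl}$-$\mathtt{ESO}$-$\mathtt{HORN}$ each of whose clauses is of one of the following forms: (i) an input clause $x=y\wedge Q_s(x)\to R(x,y)$, for $s\in\Sigma$, $R\in\mathbf{R}'$; (ii) the contradiction clause $\mathtt{min}(x)\wedge\mathtt{max}(y)\wedge R_\bot(x,y)\to\bot$, for a fixed $R_\bot\in\mathbf{R}'$; (iii) a computation clause $x<y\wedge\delta_1\wedge\cdots\wedge\delta_r\to R(x,y)$, with $R\in\mathbf{R}'$, where each hypothesis $\delta_i$ is an atom of the form $S(x+1,y)$ or $S(x,y-1)$ for $S\in\mathbf{R}'$.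
   Context: Fix a finite alphabet $\Sigma$. A nonempty word $w=w_1\cdots w_n$ is represented by the structure $\langle w\rangle=([1,n];(Q_s)_{s\in\Sigma},\mathtt{min},\mathtt{max},\mathtt{suc},\mathtt{pred})$ with $Q_s(i)\iff w_i=s$, $\mathtt{min}(i)\iff i=1$, $\mathtt{max}(i)\iff i=n$, $\mathtt{suc}(i)=\min(i+1,n)$, $\mathtt{pred}(i)=\max(i-1,1)$. For an integer $a$, $x+a$ denotes $\mathtt{suc}^a(x)$ if $a\ge0$ and $\mathtt{pred}^{-a}(x)$ if $a<0$; $y-b=\mathtt{pred}^b(y)$. A formula of $\mathtt{incl}$-$\mathtt{ESO}$-$\mathtt{HORN}$ (inclusion Horn formula) is $\Phi=\exists\mathbf{R}\forall x\forall y\,\psi(x,y)$, $\mathbf{R}$ a finite set of binary relation symbols, $\psi$ a conjunction of Horn clauses over the signature $\{(Q_s)_{s\in\Sigma},\mathtt{min},\mathtt{max},\mathtt{suc},\mathtt{pred}\}\cup\mathbf{R}\cup\{=,\le,<\}$ (usual order on $[1,n]$), each of the form $x\le y\wedge\delta_1\wedge\cdots\wedge\delta_r\to\delta_0$ with $\delta_0$ an atom $R(x,y)$ ($R\in\mathbf{R}$) or $\bot$, and each $\delta_i$ one of: $U(x+a)$, $\neg U(x+a)$, $U(y+a)$, $\neg U(y+a)$ for $U\in\{(Q_s)_{s\in\Sigma},\mathtt{min},\mathtt{max}\}$ and $a\in\mathbb Z$; $x=y$ or $x<y$; a conjunction $S(x+a,y-b)\wedge x+a\le y-b$ with $S\in\mathbf{R}$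 and integers $a,b\ge0$. (In the normal form, the leading hypothesis $x\le y$ of a clause is redundant when $x=y$ or $x<y$ is present.) *)

(* Defs.v *)
From mathcomp Require Import all_boot all_algebra.
From Stdlib Require List.
Set Implicit Arguments. Unset Strict Implicit. Unset Printing Implicit Defensive.

(* Syntax of incl-ESO-HORN formulas over an alphabet Sigma.
   Positions of a word w are 1..n with n = size w (w nonempty). *)

Section Syntax.
Variable Sigma : finType.

Inductive upred := UQ of Sigma | Umin | Umax.

Inductive var := VX | VY.

Inductive hyp (k : nat) :=
  | HU of bool (* true = positive literal, false = negated *) & upred & var & int
      (* U(v + a) or not U(v + a) *)
  | HEq
  | HLt
  | HRel of 'I_k & nat & nat  (* S(x+a, y-b) /\ x+a <= y-b,  a,b >= 0 *).

(* a Horn clause  x <= y /\ hyps -> head;  head = None means bottom *)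
Record clause (k : nat) := Clause { hyps : seq (hyp k); head : option 'I_k }.

(* Phi = exists R_0 .. R_{k-1} (binary), forall x forall y, /\ clauses *)
Record formula := Formula { nrel : nat; clauses : seq (clause nrel) }.

Variable w : seq Sigma.
Local Notation n := (size w).

(* x + a with the saturating suc / pred of <w> *)
Definition shiftp (i : nat) (a : int) : nat :=
  match a with
  | Posz m => minn (i + m) n
  | Negz m => maxn (i - m.+1) 1
  end.

Definition uholds (U : upred) (p : nat) : bool :=
  match U with
  | UQ s => onth w p.-1 == Some s
  | Umin => p == 1
  | Umax => p == n
  end.

Definition hsem k (I : 'I_k -> nat -> nat -> Prop) (x y : nat) (h : hyp k) : Prop :=
  match h with
  | HU pos U v a =>
      let p := shiftp (if v is VX then x else y) a in
      if pos then uholds U p else ~~ uholds U p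
  | HEq => x = y
  | HLt => x < y
  | HRel Sr a b =>
      let p := minn (x + a) n in
      let q := maxn (y - b) 1 in
      I Sr p q /\ p <= q
  end.

Definition clause_sat k (I : 'I_k -> nat -> nat -> Prop) (c : clause k) : Prop :=
  forall x y : nat, 1 <= x -> x <= y -> y <= n ->
    (forall h, List.In h (hyps c) -> hsem I x y h) ->
    match head c with
    | Some R => I R x y
    | None => False
    end.

Definition models (Phi : formula) : Prop :=
  exists I : 'I_(nrel Phi) -> nat -> nat -> Prop,
    forall c, List.In c (clauses Phi) -> clause_sat I c.

End Syntax.

Arguments HEq {Sigma k}.
Arguments HLt {Sigma k}.
Arguments HU {Sigma k}.
Arguments HRel {Sigma k}.

Section NormalForm.
Variable Sigma : finType.

Definition input_clause k (c : clause Sigma k) : Prop :=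
  exists (s : Sigma) (R : 'I_k),
    c = Clause [:: HEq; HU true (UQ s) VX (Posz 0)] (Some R).

Definition contradiction_clause k (Rbot : 'I_k) (c : clause Sigma k) : Prop :=
  c = Clause [:: HU true (@Umin Sigma) VX (Posz 0); HU true (@Umax Sigma) VY (Posz 0);
                 HRel Rbot 0 0] None.

Definition computation_clause k (c : clause Sigma k) : Prop :=
  exists (ds : seq (hyp Sigma k)) (R : 'I_k),
    c = Clause (HLt :: ds) (Some R) /\
    (forall d, List.In d ds ->
       exists S : 'I_k, d = HRel S 1 0 \/ d = HRel S 0 1).

Definition normal_form (Phi : formula Sigma) : Prop :=
  exists Rbot : 'I_(nrel Phi),
    forall c, List.In c (clauses Phi) ->
      input_clause c \/ contradiction_clause Rbot c \/ computation_clause c.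

End NormalForm.

(* Main.v *)
Require Import Defs.
From mathcomp Require Import all_boot all_algebra zify.
From Stdlib Require List.
From Stdlib Require Import ClassicalEpsilon.
Set Implicit Arguments. Unset Strict Implicit. Unset Printing Implicit Defensive.

Section Main.
Variable Sigma : finType.
Variable Phi : formula Sigma.
Local Notation k := (nrel Phi).
Local Notation hypk := (@hyp Sigma k).

Definition model_nb (u : seq Sigma) (J : 'I_k -> nat -> nat -> Prop) :=
  forall cl, List.In cl (clauses Phi) -> Defs.head cl <> None -> clause_sat u J cl.
Definition LM u R x y : Prop := forall J, model_nb u J -> J R x y.
Definition Viol u x y : Prop := exists cl, List.In cl (clauses Phi) /\ Defs.head cl = None /\
  1 <= x /\ x <= y /\ y <= size u /\ forall h, List.In h (hyps cl) -> hsem u (LM u) x y h.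

Lemma hsem_mono (u : seq Sigma) (I J : 'I_k -> nat -> nat -> Prop) x y h :
  (forall R p q, I R p q -> J R p q) -> hsem u I x y h -> hsem u J x y h.
Proof. by move=> IJ; case: h => //= S a b [/IJ]. Qed.

Lemma LM_model (u : seq Sigma) : model_nb u (LM u).
Proof.
move=> [hs [R|]] Hcl Hh x y H1 H2 H3 Hhy //= J HJ.
have := HJ _ Hcl Hh x y H1 H2 H3; apply => h /Hhy; apply: hsem_mono => R' p q; exact.
Qed.

Lemma LM_valid (u : seq Sigma) R x y : LM u R x y -> 1 <= x /\ x <= y /\ y <= size u.
Proof.
move=> H; apply: (H (fun _ x y => 1 <= x /\ x <= y /\ y <= size u)).
move=> cl _ Hh x' y' H1 H2 H3 _; by case: (Defs.head cl) Hh.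
Qed.

Lemma models_iff (u : seq Sigma) : models u Phi <-> ~ (exists x y, Viol u x y).
Proof.
split.
- move=> [I HI] [x [y [cl [Hcl [Hn [H1 [H2 [H3 Hh]]]]]]]].
  have LI : forall R p q, LM u R p q -> I R p q.
    move=> R p q; apply=> cl' Hcl' _; exact: HI.
  have := HI cl Hcl x y H1 H2 H3.
  rewrite Hn; apply => h /Hh; exact: hsem_mono.
- move=> NV; exists (LM u) => cl Hcl.
  case Hn: (Defs.head cl) => [R|].
  + by apply: LM_model => //; rewrite Hn.
  + move=> x y H1 H2 H3 Hh; rewrite Hn; apply: NV; exists x, y, cl; tauto.
Qed.

Definition compat (u v : seq Sigma) (M : nat -> nat -> nat -> nat -> Prop) x y x' y' (h : hypk) : Prop :=
  match h with
  | HU _ U VX a => uholds u U (shiftp u x a) = uholds v U (shiftp v x' a)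
  | HU _ U VY a => uholds u U (shiftp u y a) = uholds v U (shiftp v y' a)
  | HEq => (x = y <-> x' = y')
  | HLt => (x < y <-> x' < y')
  | HRel Sr a b =>
      minn (x + a) (size u) <= maxn (y - b) 1 ->
      minn (x' + a) (size v) <= maxn (y' - b) 1 /\
      (M (minn (x + a) (size u)) (maxn (y - b) 1) (minn (x' + a) (size v)) (maxn (y' - b) 1)
       \/ forall R, LM u R (minn (x + a) (size u)) (maxn (y - b) 1) ->
                    LM v R (minn (x' + a) (size v)) (maxn (y' - b) 1))
  end.

Lemma compat_hsem (u v : seq Sigma) M x y x' y' h (J : 'I_k -> nat -> nat -> Prop) :
  (forall R p q, J R p q -> LM u R p q /\ forall p' q', M p q p' q' -> LM v R p' q') ->
  compat u v M x y x' y' h -> hsem u J x y h -> hsem v (LM v) x' y' h.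
Proof.
move=> HJ; case: h => [pos U [] a|||Sr a b] /=.
- by move=> ->.
- by move=> ->.
- by move=> ->.
- by move=> ->.
- move=> Hc [/HJ [H1 H2] Hpq]; have [Hpq' [HM|HO]] := Hc Hpq; split => //.
  + exact: H2.
  + exact: HO.
Qed.

Lemma sim (u v : seq Sigma) (M : nat -> nat -> nat -> nat -> Prop) :
  (forall x y x' y', M x y x' y' -> 1 <= x' /\ x' <= y' /\ y' <= size v) ->
  (forall x y x' y', M x y x' y' -> forall cl, List.In cl (clauses Phi) ->
      forall h, List.In h (hyps cl) -> compat u v M x y x' y' h) ->
  forall x y x' y', M x y x' y' ->
    (forall R, LM u R x y -> LM v R x' y') /\ (Viol u x y -> Viol v x' y').
Proof.
move=> Mv Mc.
pose J R x y := LM u R x y /\ forall x' y', M x y x' y' -> LM v R x' y'.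
have HJ : model_nb u J.
  move=> [hs [R|]] Hcl Hh x y H1 H2 H3 Hhy //=.
  split.
  - have := LM_model Hcl Hh H1 H2 H3; apply.
    by move=> h /Hhy; apply: hsem_mono => ? ? ? [].
  - move=> x' y' HM; have [H1' [H2' H3']] := Mv _ _ _ _ HM.
    have := LM_model Hcl Hh H1' H2' H3'; apply.
    move=> h Hin; apply: (compat_hsem (J := J)) (Mc _ _ _ _ HM _ Hcl _ Hin) (Hhy _ Hin).
    by move=> ? ? ? [].
have LJ : forall R p q, LM u R p q -> J R p q by move=> R p q; apply.
move=> x y x' y' HM; split.
- by move=> R /LJ [_]; apply.
- move=> [cl [Hcl [Hn [H1 [H2 [H3 Hh]]]]]].
  have [H1' [H2' H3']] := Mv _ _ _ _ HM.
  exists cl; do 5!(split => //).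
  move=> h Hin; apply: (compat_hsem (J := J)) (Mc _ _ _ _ HM _ Hcl _ Hin) _.
  + by move=> ? ? ? [].
  + by apply: hsem_mono (Hh _ Hin).
Qed.


Definition hb (h : hypk) : nat :=
  match h with HU _ _ _ a => absz a | HRel _ a b => maxn a b | _ => 0 end.
Definition cb := foldr (fun cl m => maxn (foldr (fun h m => maxn (hb h) m) 0 (hyps cl)) m) 0
  (clauses Phi).
Local Notation c := cb.

Lemma hb_le cl h : List.In cl (clauses Phi) -> List.In h (hyps cl) -> hb h <= c.
Proof.
rewrite /cb; elim: (clauses Phi) => [|cl' s IH] /=; first by case.
case=> [-> |H1 H2]; last by apply: leq_trans (IH H1 H2) _; exact: leq_maxr.
move=> Hh; apply: leq_trans (leq_maxl _ _).
elim: (hyps cl) Hh => [|h' s' IH'] /=; first by case.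
case=> [<-|H]; first exact: leq_maxl.
apply: leq_trans (IH' H) (leq_maxr _ _).
Qed.

Lemma Viol_valid (u : seq Sigma) x y : Viol u x y -> 1 <= x /\ x <= y /\ y <= size u.
Proof. by move=> [cl [_ [_ [H1 [H2 [H3 _]]]]]]. Qed.

Section Pre.
Variables (s0 : Sigma) (u' : seq Sigma).
Local Notation u := (s0 :: u').

Lemma shift_pre x a : c + 3 <= x -> x <= (size u').+1 -> absz a <= c ->
  shiftp u x a = (shiftp u' x.-1 a).+1 /\ 3 <= shiftp u x a.
Proof. by case: a => m /= H1 H2 H3; split; lia. Qed.

Lemma uholds_pre U p : 3 <= p -> uholds u U p = uholds u' U p.-1.
Proof.
case: p => [|[|[|p]]] //= _; case: U => //=.
Qed.

Definition Mpre x y x' y' := x' = x.-1 /\ y' = y.-1 /\ c + 3 <= x /\ x <= y /\ y <= size u.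

Lemma compat_pre x y x' y' cl h : Mpre x y x' y' -> List.In cl (clauses Phi) ->
  List.In h (hyps cl) -> compat u u' Mpre x y x' y' h.
Proof.
move=> [-> [-> [H1 [H2 /= H3]]]] Hcl Hh; have := hb_le Hcl Hh.
case: h {Hh} => [pos U [] a|||Sr a b] /= Hb.
- have [E L] := shift_pre H1 (leq_trans H2 H3 : x <= (size u').+1) Hb.
  by rewrite (uholds_pre _ L) E.
- have [E L] := shift_pre (leq_trans H1 H2) (H3 : y <= (size u').+1) Hb.
  by rewrite (uholds_pre _ L) E.
- lia.
- lia.
- move=> Hpq; split; first lia.
  by left; rewrite /Mpre /=; lia.
Qed.

Lemma compat_pre' x y x' y' cl h : Mpre x y x' y' -> List.In cl (clauses Phi) ->
  List.In h (hyps cl) -> compat u' u (fun x' y' x y => Mpre x y x' y') x' y' x y h.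
Proof.
move=> [-> [-> [H1 [H2 /= H3]]]] Hcl Hh; have := hb_le Hcl Hh.
case: h {Hh} => [pos U [] a|||Sr a b] /= Hb.
- have [E L] := shift_pre H1 (leq_trans H2 H3 : x <= (size u').+1) Hb.
  by rewrite (uholds_pre _ L) E.
- have [E L] := shift_pre (leq_trans H1 H2) (H3 : y <= (size u').+1) Hb.
  by rewrite (uholds_pre _ L) E.
- lia.
- lia.
- move=> Hpq; split; first lia.
  by left; rewrite /Mpre /=; lia.
Qed.

Lemma Mpre_v x y x' y' : Mpre x y x' y' -> 1 <= x' /\ x' <= y' /\ y' <= size u'.
Proof. by rewrite /Mpre /=; lia. Qed.
Lemma Mpre_v' x y x' y' : Mpre x y x' y' -> 1 <= x /\ x <= y /\ y <= size u.
Proof. by rewrite /Mpre /=; lia. Qed.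

Lemma pre_sim p q : Mpre p q p.-1 q.-1 ->
  (forall R, LM u R p q <-> LM u' R p.-1 q.-1) /\ (Viol u p q <-> Viol u' p.-1 q.-1).
Proof.
move=> HM.
have [A1 A2] := sim (u := u) (v := u') (M := Mpre) Mpre_v
  (fun x y x' y' H cl Hcl h Hh => compat_pre H Hcl Hh) HM.
have [B1 B2] := sim (u := u') (v := u) (M := fun x' y' x y => Mpre x y x' y')
  (fun x' y' x y H => Mpre_v' H)
  (fun x' y' x y H cl Hcl h Hh => compat_pre' H Hcl Hh) HM.
split; last by split. by move=> R; split; [apply: A1 | apply: B1].
Qed.

Lemma pre_drop R p q : c + 3 <= p -> (LM u R p q <-> LM u' R p.-1 q.-1).
Proof.
move=> Hp; split => H.
- have [H1 [H2 H3]] := LM_valid H.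
  by apply/(proj1 (pre_sim _) R) => //; rewrite /Mpre; lia.
- have [H1 [H2 H3]] := LM_valid H.
  by apply/(proj1 (pre_sim _) R) => //; rewrite /Mpre /=; lia.
Qed.

Lemma pre_drop_viol p q : c + 3 <= p -> (Viol u p q <-> Viol u' p.-1 q.-1).
Proof.
move=> Hp; split => H.
- have [H1 [H2 H3]] := Viol_valid H.
  by apply/(proj2 (pre_sim _)) => //; rewrite /Mpre; lia.
- have [H1 [H2 H3]] := Viol_valid H.
  by apply/(proj2 (pre_sim _)) => //; rewrite /Mpre /=; lia.
Qed.
End Pre.


Section Suf.
Variables (s0 : Sigma) (u' : seq Sigma).
Local Notation u := (u' ++ [:: s0]).

Lemma size_u : size u = (size u').+1.
Proof. by rewrite size_cat addn1. Qed.

Lemma shift_suf x a : 1 <= x -> x + c + 1 <= size u' -> absz a <= c ->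
  shiftp u x a = shiftp u' x a /\ 1 <= shiftp u x a /\ shiftp u x a < size u'.
Proof. by rewrite /shiftp size_u; case: a => m /= H1 H2 H3; split; lia. Qed.

Lemma uholds_suf U p : 1 <= p -> p < size u' -> uholds u U p = uholds u' U p.
Proof.
move=> H1 H2; case: U => //=.
- by move=> s; rewrite onth_cat; have -> : p.-1 < size u' by lia.
- rewrite size_u; apply/eqP/eqP; lia.
Qed.

Definition Msuf x y x' y' := x' = x /\ y' = y /\ 1 <= x /\ x <= y /\ y + c + 1 <= size u'.

Lemma compat_suf x y x' y' cl h : Msuf x y x' y' -> List.In cl (clauses Phi) ->
  List.In h (hyps cl) -> compat u u' Msuf x y x' y' h /\
  compat u' u (fun x' y' x y => Msuf x y x' y') x' y' x y h.
Proof.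
move=> [-> [-> [H1 [H2 H3]]]] Hcl Hh; have := hb_le Hcl Hh.
case: h {Hh} => [pos U [] a|||Sr a b] /= Hb.
- have Hx : x + c + 1 <= size u' by lia.
  have [E [L1 L2]] := shift_suf H1 Hx Hb.
  by rewrite (uholds_suf _ L1 L2) E.
- have Hy : 1 <= y by lia.
  have [E [L1 L2]] := shift_suf Hy H3 Hb.
  by rewrite (uholds_suf _ L1 L2) E.
- lia.
- lia.
- rewrite size_u; split => Hpq; (split; first lia); by left; rewrite /Msuf; lia.
Qed.

Lemma Msuf_v x y x' y' : Msuf x y x' y' -> 1 <= x' /\ x' <= y' /\ y' <= size u'.
Proof. by rewrite /Msuf; lia. Qed.
Lemma Msuf_v' x y x' y' : Msuf x y x' y' -> 1 <= x /\ x <= y /\ y <= size u.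
Proof. by rewrite /Msuf size_u; lia. Qed.

Lemma suf_sim p q : Msuf p q p q ->
  (forall R, LM u R p q <-> LM u' R p q) /\ (Viol u p q <-> Viol u' p q).
Proof.
move=> HM.
have [A1 A2] := sim (u := u) (v := u') (M := Msuf) Msuf_v
  (fun x y x' y' H cl Hcl h Hh => proj1 (compat_suf H Hcl Hh)) HM.
have [B1 B2] := sim (u := u') (v := u) (M := fun x' y' x y => Msuf x y x' y')
  (fun x' y' x y H => Msuf_v' H)
  (fun x' y' x y H cl Hcl h Hh => proj2 (compat_suf H Hcl Hh)) HM.
split; last by split. by move=> R; split; [apply: A1 | apply: B1].
Qed.

Lemma suf_drop R p q : q + c + 1 <= size u' -> (LM u R p q <-> LM u' R p q).
Proof.
move=> Hq; split => H.
- have [H1 [H2 H3]] := LM_valid H.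
  by apply/(proj1 (suf_sim _) R) => //; rewrite /Msuf; lia.
- have [H1 [H2 H3]] := LM_valid H.
  by apply/(proj1 (suf_sim _) R) => //; rewrite /Msuf; lia.
Qed.

Lemma suf_drop_viol p q : q + c + 1 <= size u' -> (Viol u p q <-> Viol u' p q).
Proof.
move=> Hq; split => H.
- have [H1 [H2 H3]] := Viol_valid H.
  by apply/(proj2 (suf_sim _)) => //; rewrite /Msuf; lia.
- have [H1 [H2 H3]] := Viol_valid H.
  by apply/(proj2 (suf_sim _)) => //; rewrite /Msuf; lia.
Qed.
End Suf.


Lemma onth_rev_idx (z : seq Sigma) j : j < size z -> onth z (size z - j.+1) = onth (rev z) j.
Proof.
move=> Hj; rewrite !onthE map_rev nth_rev ?size_map //.
Qed.

Section Top.
Variables (l z1 z2 r : seq Sigma).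
Hypothesis Hpre : forall i, i <= c -> onth z1 i = onth z2 i.
Hypothesis Hsuf : forall i, i <= c -> onth (rev z1) i = onth (rev z2) i.
Hypothesis L1 : c + c + 2 < size z1.
Hypothesis L2 : c + c + 2 < size z2.
Local Notation u1 := (l ++ z1 ++ r).
Local Notation u2 := (l ++ z2 ++ r).
Local Notation P := (size l + 1).
Local Notation Q1 := (size l + size z1).
Local Notation Q2 := (size l + size z2).
Hypothesis Orc : forall a b, a <= c -> b <= c -> 0 < a + b -> forall R,
  LM u1 R (size l + 1 + a) (size l + size z1 - b) ->
  LM u2 R (size l + 1 + a) (size l + size z2 - b).

Lemma onth_left i : i <= size l + c -> onth u1 i = onth u2 i.
Proof.
move=> Hi; rewrite !onth_cat; case: ifP => // Hl.
have -> : i - size l < size z1 by lia.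
have -> : i - size l < size z2 by lia.
apply: Hpre; lia.
Qed.

Lemma onth_right_in j : j <= c ->
  onth u1 (size l + size z1 - j.+1) = onth u2 (size l + size z2 - j.+1).
Proof.
move=> Hj; rewrite !onth_cat.
have -> : (size l + size z1 - j.+1 < size l) = false by lia.
have -> : (size l + size z2 - j.+1 < size l) = false by lia.
have -> : size l + size z1 - j.+1 - size l < size z1 by lia.
have -> : size l + size z2 - j.+1 - size l < size z2 by lia.
have -> : size l + size z1 - j.+1 - size l = size z1 - j.+1 by lia.
have -> : size l + size z2 - j.+1 - size l = size z2 - j.+1 by lia.
rewrite !onth_rev_idx; try lia.
exact: Hsuf.
Qed.

Lemma onth_right_out (z : seq Sigma) j : onth (l ++ z ++ r) (size l + size z + j) = onth r j.
Proof.
rewrite !onth_cat.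
have -> : (size l + size z + j < size l) = false by lia.
have -> : (size l + size z + j - size l < size z) = false by lia.
congr onth; lia.
Qed.

Definition Mtop x y x' y' := x = P /\ y = Q1 /\ x' = P /\ y' = Q2.

Lemma compat_top x y x' y' cl h : Mtop x y x' y' -> List.In cl (clauses Phi) ->
  List.In h (hyps cl) -> compat u1 u2 Mtop x y x' y' h.
Proof.
move=> [-> [-> [-> ->]]] Hcl Hh; have := hb_le Hcl Hh.
case: h {Hh} => [pos U [] a|||Sr a b] /= Hb.
- have [E Lp] : shiftp u1 P a = shiftp u2 P a /\ 1 <= shiftp u2 P a <= size l + 1 + c.
    by rewrite /shiftp !size_cat; case: a Hb => m /= Hb; split; lia.
  rewrite E; case: U => [s||] /=.
  + by rewrite onth_left //; lia.
  + by [].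
  + apply/eqP/eqP; move: Lp; rewrite !size_cat; lia.
- case: a Hb => m /= Hb.
  + have E1 : minn (Q1 + m) (size u1) = Q1 + minn m (size r) by rewrite !size_cat; lia.
    have E2 : minn (Q2 + m) (size u2) = Q2 + minn m (size r) by rewrite !size_cat; lia.
    rewrite E1 E2; move: (minn m (size r)) => d.
    case: U => [s||] /=.
    * case: d => [|d].
      - rewrite !addn0.
        have -> : (size l + size z1).-1 = size l + size z1 - 0.+1 by lia.
        have -> : (size l + size z2).-1 = size l + size z2 - 0.+1 by lia.
        by rewrite onth_right_in.
      - by rewrite !addnS /= !onth_right_out.
    * apply/eqP/eqP; lia.
    * apply/eqP/eqP; rewrite !size_cat; lia.
  + have E1 : maxn (Q1 - m.+1) 1 = size l + size z1 - m.+1 by lia.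
    have E2 : maxn (Q2 - m.+1) 1 = size l + size z2 - m.+1 by lia.
    rewrite E1 E2; case: U => [s||] /=.
    * have -> : (size l + size z1 - m.+1).-1 = size l + size z1 - m.+2 by lia.
      have -> : (size l + size z2 - m.+1).-1 = size l + size z2 - m.+2 by lia.
      by rewrite onth_right_in.
    * apply/eqP/eqP; lia.
    * apply/eqP/eqP; rewrite !size_cat; lia.
- lia.
- lia.
- have E1 : minn (P + a) (size u1) = size l + 1 + a by rewrite !size_cat; lia.
  have E2 : minn (P + a) (size u2) = size l + 1 + a by rewrite !size_cat; lia.
  have E3 : maxn (Q1 - b) 1 = size l + size z1 - b by lia.
  have E4 : maxn (Q2 - b) 1 = size l + size z2 - b by lia.
  rewrite E1 E2 E3 E4 => _; split; first lia.
  case: (posnP (a + b)) => Hab.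
  + by left; rewrite /Mtop; lia.
  + by right; apply: Orc => //; lia.
Qed.

Lemma top_sim : (forall R, LM u1 R P Q1 -> LM u2 R P Q2) /\ (Viol u1 P Q1 -> Viol u2 P Q2).
Proof.
have HM : Mtop P Q1 P Q2 by [].
apply: (sim (M := Mtop) _ _ HM).
- by move=> x y x' y'; rewrite /Mtop !size_cat; lia.
- by move=> x y x' y' H cl Hcl h Hh; apply: compat_top H Hcl Hh.
Qed.
End Top.


Local Notation Cc := (c + c + 2).
Definition ctx := (Cc.-tuple (option Sigma)).
Definition cseq (t : ctx) : seq Sigma := pmap id (tval t).

Lemma cseq_size t : size (cseq t) <= Cc.
Proof. by rewrite /cseq size_pmap; apply: leq_trans (count_size _ _) _; rewrite size_tuple. Qed.

Lemma pmap_some (s : seq Sigma) : pmap id (map Some s) = s.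
Proof. by elim: s => //= x s ->. Qed.
Lemma pmap_none n : pmap (@id (option Sigma)) (nseq n None) = [::].
Proof. by elim: n. Qed.

Lemma cseq_surj s : size s <= Cc -> exists t : ctx, cseq t = s.
Proof.
move=> Hs.
have Hsz : size (map Some s ++ nseq (Cc - size s) None) == Cc.
  by rewrite size_cat size_map size_nseq; apply/eqP; lia.
exists (Tuple Hsz); by rewrite /cseq /= pmap_cat pmap_some pmap_none cats0.
Qed.

Definition pb (P : Prop) : bool := if excluded_middle_informative P then true else false.
Lemma pbP P : pb P <-> P.
Proof. by rewrite /pb; case: excluded_middle_informative. Qed.
Lemma pb_ext P Q : (P <-> Q) -> pb P = pb Q.
Proof.
move=> H; rewrite /pb; case: excluded_middle_informative => HP; case: excluded_middle_informative => HQ //; exfalso; tauto.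
Qed.

Definition Kt := ((('I_Cc.+1 * option Sigma) + ('I_Cc.+1 * option Sigma)) +
   ((ctx * ctx * 'I_c.+1 * 'I_c.+1 * 'I_k) + (ctx * ctx)))%type.

Definition qLM (z l r : seq Sigma) a b R :=
  LM (l ++ z ++ r) R (size l + 1 + a) (size l + size z - b).
Definition qViol (z l r : seq Sigma) :=
  exists x y, size l + 1 <= x /\ y <= size l + size z /\ Viol (l ++ z ++ r) x y.

Definition KF : finType := Kt.

Definition qval (z : seq Sigma) (q : Kt) : bool :=
  match q with
  | inl (inl (i, o)) => onth z i == o
  | inl (inr (i, o)) => onth (rev z) i == o
  | inr (inl (t1, t2, a, b, R)) => pb (qLM z (cseq t1) (cseq t2) a b R)
  | inr (inr (t1, t2)) => pb (qViol z (cseq t1) (cseq t2))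
  end.

Definition init (z : seq Sigma) := take (size z).-1 z.
Lemma init_rcons z' e : init (rcons z' e) = z'.
Proof. by rewrite /init size_rcons /= -cats1 take_size_cat. Qed.

Definition lsh (l : seq Sigma) z0 := rcons (drop (size l - Cc.-1) l) z0.
Definition rsh zl (r : seq Sigma) := zl :: take Cc.-1 r.

Lemma lsh_size l z0 : size l <= Cc -> size (lsh l z0) <= Cc.
Proof. by rewrite /lsh size_rcons size_drop; lia. Qed.
Lemma rsh_size zl r : size (rsh zl r) <= Cc.
Proof. by rewrite /rsh /= size_take_min; lia. Qed.

Lemma tail_view l z0 zt r : size l <= Cc -> exists d, d <= 1 /\
  size l + 1 = size (lsh l z0) + d /\
  forall x y, size l + 2 <= x ->
    (Viol (l ++ (z0 :: zt) ++ r) x y <-> Viol (lsh l z0 ++ zt ++ r) (x - d) (y - d)) /\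
    (forall R, LM (l ++ (z0 :: zt) ++ r) R x y <-> LM (lsh l z0 ++ zt ++ r) R (x - d) (y - d)).
Proof.
move=> Hl; case: (ltnP (size l) Cc) => Hl2.
- exists 0; rewrite /lsh.
  have -> : size l - Cc.-1 = 0 by lia.
  rewrite drop0 size_rcons cat_rcons; split => //; split; first lia.
  by move=> x y _; rewrite !subn0; split.
- have HlC : size l = Cc by lia.
  case: l Hl HlC {Hl2} => [|l0 l'] /= Hl HlC; first lia.
  exists 1; rewrite /lsh /=.
  have -> : (size l').+1 - Cc.-1 = 1 by lia.
  rewrite drop1 /= size_rcons cat_rcons; split => //; split; first lia.
  move=> x y Hx; have Hx' : c + 3 <= x by lia.
  rewrite !subn1; split; first exact: pre_drop_viol.
  by move=> R; apply: pre_drop.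
Qed.

Lemma init_view l zi zl r : size r <= Cc ->
  forall x y, y <= size l + size zi ->
    (Viol (l ++ rcons zi zl ++ r) x y <-> Viol (l ++ zi ++ rsh zl r) x y) /\
    (forall R, LM (l ++ rcons zi zl ++ r) R x y <-> LM (l ++ zi ++ rsh zl r) R x y).
Proof.
move=> Hr x y Hy; rewrite /rsh cat_rcons.
case: (ltnP (size r) Cc) => Hr2.
- by rewrite take_oversize //; lia.
- have HrC : size r = Cc by lia.
  case/lastP: r Hr HrC {Hr2} => [|r' rl] Hr HrC; first by rewrite /= in HrC; lia.
  rewrite size_rcons in HrC.
  have -> : take Cc.-1 (rcons r' rl) = r' by rewrite -cats1 take_size_cat //; lia.
  have E : l ++ zi ++ zl :: rcons r' rl = (l ++ zi ++ zl :: r') ++ [:: rl].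
    by rewrite -cats1 -!catA.
  have Hs : y + c + 1 <= size (l ++ zi ++ zl :: r') by rewrite !size_cat /=; lia.
  rewrite E; split; first exact: suf_drop_viol.
  by move=> R; apply: suf_drop.
Qed.


Lemma pb_eq P Q : pb P = pb Q -> (P <-> Q).
Proof. move=> E; rewrite -(pbP P) -(pbP Q) E; tauto. Qed.

Lemma qLM_tail l z0 zt r a b R : size l <= Cc -> 1 <= a -> 1 <= size zt ->
  qLM (z0 :: zt) l r a b R <-> qLM zt (lsh l z0) r (a - 1) b R.
Proof.
move=> Hl Ha Hz; have [d [Hd [Es V]]] := tail_view z0 zt r Hl.
rewrite /qLM; have Hx : size l + 2 <= size l + 1 + a by lia.
rewrite (proj2 (V _ (size l + size (z0 :: zt) - b) Hx)).
have -> : size l + 1 + a - d = size (lsh l z0) + 1 + (a - 1) by lia.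
have Sz : size (z0 :: zt) = (size zt).+1 by [].
have -> : size l + size (z0 :: zt) - b - d = size (lsh l z0) + size zt - b by rewrite Sz; lia.
done.
Qed.

Lemma qLM_init l zi zl r a b R : size r <= Cc -> 1 <= b -> 1 <= size zi ->
  qLM (rcons zi zl) l r a b R <-> qLM zi l (rsh zl r) a (b - 1) R.
Proof.
move=> Hr Hb Hz; rewrite /qLM.
have Hy : size l + size (rcons zi zl) - b <= size l + size zi by rewrite size_rcons; lia.
rewrite (proj2 (init_view zl Hr (size l + 1 + a) Hy)).
have -> : size l + size (rcons zi zl) - b = size l + size zi - (b - 1) by rewrite size_rcons; lia.
done.
Qed.

Lemma qViol_dec l z0 zt zi zl r : size l <= Cc -> size r <= Cc ->
  z0 :: zt = rcons zi zl -> 1 <= size zt ->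
  qViol (z0 :: zt) l r <->
  Viol (l ++ (z0 :: zt) ++ r) (size l + 1) (size l + size (z0 :: zt)) \/
  qViol zt (lsh l z0) r \/ qViol zi l (rsh zl r).
Proof.
move=> Hl Hr E Hz.
have Hsz : size zi = size zt by move: (congr1 size E); rewrite size_rcons /=; case.
have [d [Hd [Es V]]] := tail_view z0 zt r Hl.
split.
- move=> [x [y [Hx [Hy HV]]]].
  case: (ltnP (size l + 1) x) => Hx2.
  + right; left; exists (x - d), (y - d).
    have Hx3 : size l + 2 <= x by lia.
    split; first lia. split; first (rewrite /= in Hy; lia).
    exact: (proj1 (proj1 (V x y Hx3)) HV).
  + have Ex : x = size l + 1 by lia.
    case: (ltnP y (size l + size (z0 :: zt))) => Hy2.
    * right; right; exists x, y; split; first lia. split; first (rewrite /= in Hy2; lia).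
      have Hy3 : y <= size l + size zi by rewrite /= in Hy2; lia.
      apply/(proj1 (init_view zl Hr x Hy3)); by rewrite -E.
    * left; have Ey : y = size l + size (z0 :: zt) by lia.
      by rewrite -Ex -Ey.
- case=> [HV|[[x [y [Hx [Hy HV]]]]|[x [y [Hx [Hy HV]]]]]].
  + exists (size l + 1), (size l + size (z0 :: zt)); split => //; split => //.
  + exists (x + d), (y + d).
    have Hx3 : size l + 2 <= x + d by lia.
    split; first lia. split; first (rewrite /=; lia).
    apply/(proj1 (V _ (y + d) Hx3)); by rewrite !addnK.
  + exists x, y; split; first lia. split; first (rewrite /=; lia).
    have Hy3 : y <= size l + size zi by lia.
    rewrite E; exact/(proj1 (init_view zl Hr x Hy3)).
Qed.

Lemma qeq_onth (y1 y2 : seq Sigma) : (forall q, qval y1 q = qval y2 q) ->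
  forall i, i <= Cc -> onth y1 i = onth y2 i /\ onth (rev y1) i = onth (rev y2) i.
Proof.
move=> H i Hi; have Hi' : i < Cc.+1 by [].
have := H (inl (inl (Ordinal Hi', onth y1 i))).
have := H (inl (inr (Ordinal Hi', onth (rev y1) i))).
by rewrite /= !eqxx => /esym/eqP <- /esym/eqP <-.
Qed.

Lemma onth_rcons0 (s : seq Sigma) x : 0 < size s -> onth (rcons s x) 0 = onth s 0.
Proof. by case: s. Qed.


Lemma cong z1 z2 : 2 <= size z1 -> 2 <= size z2 ->
  (forall q, qval (behead z1) q = qval (behead z2) q) ->
  (forall q, qval (init z1) q = qval (init z2) q) ->
  forall q, qval z1 q = qval z2 q.
Proof.
case: z1 => [|a1 t1] //; case: z2 => [|a2 t2] //= S1 S2 HT HI.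
have [i1 [e1 E1]] : exists i1 e1, a1 :: t1 = rcons i1 e1
  by exists (belast a1 t1), (last a1 t1); exact: lastI.
have [i2 [e2 E2]] : exists i2 e2, a2 :: t2 = rcons i2 e2
  by exists (belast a2 t2), (last a2 t2); exact: lastI.
have Si1 : size i1 = size t1 by move: (congr1 size E1); rewrite size_rcons /=; case.
have Si2 : size i2 = size t2 by move: (congr1 size E2); rewrite size_rcons /=; case.
rewrite E1 E2 !init_rcons in HI.
have Hp : forall i, i <= Cc -> onth (a1 :: t1) i = onth (a2 :: t2) i.
  case=> [|j] Hj.
  - rewrite E1 E2 !onth_rcons0; try lia.
    exact: (proj1 (qeq_onth HI (i:=0) (leq0n _))).
    exact: (proj1 (qeq_onth HT (i:=j) (ltnW Hj))).
have Hs : forall i, i <= Cc -> onth (rev (a1 :: t1)) i = onth (rev (a2 :: t2)) i.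
  case=> [|j] Hj.
  - rewrite !rev_cons !onth_rcons0 ?size_rev; try lia.
    exact: (proj2 (qeq_onth HT (i:=0) (leq0n _))).
  - rewrite E1 E2 !rev_rcons /=.
    exact: (proj2 (qeq_onth HI (i:=j) (ltnW Hj))).
have Ea : a1 = a2 by move: (Hp 0 isT) => /= [].
have Ee : e1 = e2 by move: (Hs 0 isT); rewrite E1 E2 !rev_rcons /= => [[]].
subst a2 e2.
case: (leqP (size (a1 :: t1)) Cc) => Hshort.
  have E : a1 :: t1 = a1 :: t2.
    have H2 : size (a1 :: t2) <= Cc.
      have : ~~ onth (a1 :: t2) Cc by rewrite -Hp // onth_default.
      by rewrite onthNE.
    apply: eq_from_onth => i; case: (leqP i Cc) => Hi; first exact: Hp.
    by rewrite !onth_default //; lia.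
  by move=> q; rewrite E.
have Hlong2 : Cc < size (a1 :: t2).
  case: (leqP (size (a1 :: t2)) Cc) => // H2.
  by have := onthTE (a1 :: t1) Cc; rewrite Hp // onth_default // Hshort.
have near : forall l r, size l <= Cc -> size r <= Cc -> forall a b R, a <= c -> b <= c ->
    0 < a + b -> (qLM (a1 :: t1) l r a b R <-> qLM (a1 :: t2) l r a b R).
  move=> l r Hl Hr a b R Ha Hb Hab.
  case: (posnP a) => Ha0.
  - subst a; rewrite E1 E2 !qLM_init //; try lia.
    have [tl Etl] := cseq_surj Hl.
    have [tr Etr] := cseq_surj (rsh_size e1 r).
    have Hb1 : b - 1 < c.+1 by lia.
    have Ha1 : 0 < c.+1 by [].
    have := HI (inr (inl (tl, tr, Ordinal Ha1, Ordinal Hb1, R))).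
    rewrite /= Etl Etr; exact: pb_eq.
  - rewrite !qLM_tail //; try lia.
    have [tl Etl] := cseq_surj (lsh_size a1 Hl).
    have [tr Etr] := cseq_surj Hr.
    have Ha1 : a - 1 < c.+1 by lia.
    have Hb1 : b < c.+1 by lia.
    have := HT (inr (inl (tl, tr, Ordinal Ha1, Ordinal Hb1, R))).
    rewrite /= Etl Etr; exact: pb_eq.
have Hpc : forall i, i <= c -> onth (a1 :: t1) i = onth (a1 :: t2) i by move=> i Hi; apply: Hp; lia.
have Hsc : forall i, i <= c -> onth (rev (a1 :: t1)) i = onth (rev (a1 :: t2)) i
  by move=> i Hi; apply: Hs; lia.
have Hpc' : forall i, i <= c -> onth (a1 :: t2) i = onth (a1 :: t1) i by move=> i /Hpc.
have Hsc' : forall i, i <= c -> onth (rev (a1 :: t2)) i = onth (rev (a1 :: t1)) i by move=> i /Hsc.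
have top : forall l r, size l <= Cc -> size r <= Cc ->
   (forall R, qLM (a1 :: t1) l r 0 0 R <-> qLM (a1 :: t2) l r 0 0 R) /\
   (Viol (l ++ (a1 :: t1) ++ r) (size l + 1) (size l + size (a1 :: t1)) <->
    Viol (l ++ (a1 :: t2) ++ r) (size l + 1) (size l + size (a1 :: t2))).
  move=> l r Hl Hr.
  have [A1 A2] := top_sim (l := l) (r := r) Hpc Hsc Hshort Hlong2
    (fun a b Ha Hb Hab R => proj1 (near l r Hl Hr a b R Ha Hb Hab)).
  have [B1 B2] := top_sim (l := l) (r := r) Hpc' Hsc' Hlong2 Hshort
    (fun a b Ha Hb Hab R => proj2 (near l r Hl Hr a b R Ha Hb Hab)).
  split; last by split.
  by move=> R; rewrite /qLM !addn0 !subn0; split; [apply: A1 | apply: B1].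
case=> [[[i o]|[i o]]|[[[[[tl tr] a] b] R]|[tl tr]]] /=.
- by rewrite Hp //; rewrite -ltnS.
- by rewrite Hs //; rewrite -ltnS.
- apply: pb_ext.
  case: (posnP (a + b)) => Hab.
  + have -> : nat_of_ord a = 0 by lia.
    have -> : nat_of_ord b = 0 by lia.
    exact: (proj1 (top _ _ (cseq_size tl) (cseq_size tr)) R).
  + apply: near => //; try exact: cseq_size; rewrite -ltnS //.
- apply: pb_ext.
  have Hl := cseq_size tl; have Hr := cseq_size tr.
  have Ht1 : 1 <= size t1 by lia.
  have Ht2 : 1 <= size t2 by lia.
  rewrite (qViol_dec Hl Hr E1 Ht1) (qViol_dec Hl Hr E2 Ht2).
  have [_ TV] := top _ _ Hl Hr.
  have [tl' Etl] := cseq_surj (lsh_size a1 Hl).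
  have [tr' Etr] := cseq_surj (rsh_size e1 (cseq tr)).
  have V1 : qViol t1 (lsh (cseq tl) a1) (cseq tr) <-> qViol t2 (lsh (cseq tl) a1) (cseq tr).
    by apply: pb_eq; have := HT (inr (inr (tl', tr))); rewrite /= Etl.
  have V2 : qViol i1 (cseq tl) (rsh e1 (cseq tr)) <-> qViol i2 (cseq tl) (rsh e1 (cseq tr)).
    by apply: pb_eq; have := HI (inr (inr (tl, tr'))); rewrite /= Etr.
  by rewrite TV V1 V2.
Qed.


Definition stF : finType := {ffun KF -> bool}.
Local Notation stT := (Finite.sort stF).
Definition st (z : seq Sigma) : stT := [ffun q : KF => qval z q] : {ffun KF -> bool}.

Definition gfun (p q : stT) : stT :=
  match excluded_middle_informative
    (exists z, 2 <= size z /\ st (behead z) = p /\ st (init z) = q) with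
  | left H => st (proj1_sig (constructive_indefinite_description _ H))
  | right _ => p
  end.

Lemma gfunE z : 2 <= size z -> gfun (st (behead z)) (st (init z)) = st z.
Proof.
move=> Hz; rewrite /gfun; case: excluded_middle_informative => [H|H]; last first.
  by exfalso; apply: H; exists z.
case: constructive_indefinite_description => z' [Hz' [E1 E2]] /=.
apply/ffunP => q; rewrite !ffunE; apply: cong => // q'.
- by have := congr1 (fun f : {ffun KF -> bool} => f q') E1; rewrite !ffunE.
- by have := congr1 (fun f : {ffun KF -> bool} => f q') E2; rewrite !ffunE.
Qed.

Definition ff (s : Sigma) : stT := st [:: s].
Definition t0 : ctx := nseq_tuple Cc None.
Lemma cseq_t0 : cseq t0 = [::].
Proof. exact: pmap_none. Qed.
Definition q0 : Kt := inr (inr (t0, t0)).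
Definition Acc (t : stT) : bool := ~~ (t : {ffun KF -> bool}) q0.

Lemma acc_iff w : Acc (st w) <-> models w Phi.
Proof.
rewrite models_iff /Acc ffunE /= cseq_t0.
have E : qViol w [::] [::] <-> exists x y, Viol w x y.
  split.
  - by move=> [x [y [_ [_ H]]]]; exists x, y; rewrite cats0 in H.
  - move=> [x [y H]]; have [H1 [H2 H3]] := Viol_valid H.
    by exists x, y; rewrite cats0 /=; split => //; split.
rewrite -E; rewrite /pb; case: excluded_middle_informative => H; split => //= _.
Qed.

Definition sub (w : seq Sigma) x y := take (y - x + 1) (drop x.-1 w).

Lemma sub_size w x y : 1 <= x -> x <= y -> y <= size w -> size (sub w x y) = y - x + 1.
Proof. by move=> *; rewrite /sub size_takel // size_drop; lia. Qed.



Lemma behead_take m (s : seq Sigma) : behead (take m s) = take m.-1 (behead s).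
Proof. by case: s => [|x s]; case: m => [|m] /=; rewrite ?take0. Qed.

Lemma sub_behead w x y : 1 <= x -> x < y -> behead (sub w x y) = sub w x.+1 y.
Proof.
move=> H1 H2; rewrite /sub behead_take -drop1 drop_drop.
have -> : (y - x + 1).-1 = y - x.+1 + 1 by lia.
by have -> : 1 + x.-1 = x.+1.-1 by lia.
Qed.

Lemma sub_init w x y : 1 <= x -> x < y -> y <= size w -> init (sub w x y) = sub w x y.-1.
Proof.
move=> H1 H2 H3; rewrite /init sub_size //; try lia.
rewrite /sub take_takel; last lia.
by have -> : (y - x + 1).-1 = y.-1 - x + 1 by lia.
Qed.

Lemma sub_one w x s : onth w x.-1 = Some s -> sub w x x = [:: s].
Proof.
move=> H; have Hx : x.-1 < size w by rewrite -onthTE H.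
rewrite /sub subnn add0n (drop_nth s Hx) (@onth_nth _ s s w x.-1 H).
by rewrite /= take0.
Qed.

Lemma sub_full w : 1 <= size w -> sub w 1 (size w) = w.
Proof. by move=> H; rewrite /sub drop0 subn1 addn1 prednK // take_size. Qed.


Definition Nn : nat := #|stF|.
Lemma NnE : #|stF| = Nn. Proof. by []. Qed.
Definition Rt0 (t : stT) : 'I_Nn := cast_ord NnE (enum_rank t).
Definition Rt (t : stT) : 'I_Nn.+1 := widen_ord (leqnSn Nn) (Rt0 t).
Definition Rbot : 'I_Nn.+1 := ord_max.

Lemma Rt_inj t1 t2 : Rt t1 = Rt t2 -> t1 = t2.
Proof.
move=> E; have E' : Rt0 t1 = Rt0 t2 by apply: val_inj; exact: (congr1 val E).
exact: enum_rank_inj (cast_ord_inj E').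
Qed.
Lemma Rt_neq t : Rt t <> Rbot.
Proof.
move=> E; have E' := congr1 (@nat_of_ord _) E.
have L := ltn_ord (Rt0 t).
change (nat_of_ord (Rt0 t) = Nn) in E'.
by move: L; rewrite E' ltnn.
Qed.

Definition hinp (s : Sigma) : seq (@hyp Sigma Nn.+1) := [:: HEq; HU true (UQ s) VX (Posz 0)].
Definition inc s := Clause (hinp s) (Some (Rt (ff s))).
Definition incb s := Clause (hinp s) (Some (if Acc (ff s) then Rt (ff s) else Rbot)).
Definition hcmp (pq : stT * stT) : seq (@hyp Sigma Nn.+1) :=
  [:: HLt; HRel (Rt pq.1) 1 0; HRel (Rt pq.2) 0 1].
Definition cmp pq := Clause (hcmp pq) (Some (Rt (gfun pq.1 pq.2))).
Definition cmpb pq := Clause (hcmp pq)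
  (Some (if Acc (gfun pq.1 pq.2) then Rt (gfun pq.1 pq.2) else Rbot)).
Definition contra : clause Sigma Nn.+1 :=
  Clause [:: HU true (@Umin Sigma) VX (Posz 0); HU true (@Umax Sigma) VY (Posz 0);
             HRel Rbot 0 0] None.
Definition NF : formula Sigma :=
  @Formula Sigma Nn.+1 (contra :: map inc (enum Sigma) ++ map incb (enum Sigma) ++
     map cmp (enum {: stT * stT}) ++ map cmpb (enum {: stT * stT})).

Lemma In_cat {T : Type} (x : T) s1 s2 : List.In x (s1 ++ s2) <-> List.In x s1 \/ List.In x s2.
Proof. by elim: s1 => [|y s1 IH] /=; [tauto | rewrite IH; tauto]. Qed.
Lemma In_map {A B : Type} (f : A -> B) y s :
  List.In y (map f s) <-> exists x, f x = y /\ List.In x s.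
Proof.
elim: s => [|x s IH] /=; first by split => // [[x []]].
rewrite IH; split.
- by case=> [<-|[x' [E H]]]; [exists x; tauto | exists x'; tauto].
- by case=> x' [E [->|H]]; [left | right; exists x'].
Qed.
Lemma In_enum (T : finType) (x : T) : List.In x (enum T).
Proof.
have : x \in enum T by rewrite mem_enum.
elim: (enum T) => [|y s IH] //=; rewrite in_cons => /orP [/eqP ->|/IH]; tauto.
Qed.

Lemma NF_normal : normal_form NF.
Proof.
exists Rbot => cl [<-|]; first by right; left.
move/In_cat; rewrite !In_cat !In_map => [[[s [<- _]]|[[s [<- _]]|[[pq [<- _]]|[pq [<- _]]]]]].
- by left; exists s, (Rt (ff s)).
- by left; exists s, (if Acc (ff s) then Rt (ff s) else Rbot).
- right; right; exists [:: HRel (Rt pq.1) 1 0; HRel (Rt pq.2) 0 1], (Rt (gfun pq.1 pq.2)).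
  split => // d [<-|[<-|[]]]; [exists (Rt pq.1); left | exists (Rt pq.2); right] => //.
- right; right; exists [:: HRel (Rt pq.1) 1 0; HRel (Rt pq.2) 0 1],
    (if Acc (gfun pq.1 pq.2) then Rt (gfun pq.1 pq.2) else Rbot).
  split => // d [<-|[<-|[]]]; [exists (Rt pq.1); left | exists (Rt pq.2); right] => //.
Qed.


Arguments st : simpl never.
Arguments gfun : simpl never.
Arguments Acc : simpl never.
Arguments ff : simpl never.
Arguments Rt : simpl never.
Arguments Rbot : simpl never.

Lemma shift0 (w : seq Sigma) x : x <= size w -> shiftp w x (Posz 0) = x.
Proof. by rewrite /shiftp addn0 => H; apply/minn_idPl. Qed.

Lemma In_inc s : List.In (inc s) (clauses NF).
Proof. right; apply/In_cat; left; apply/In_map; exists s; split => //; exact: In_enum. Qed.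
Lemma In_incb s : List.In (incb s) (clauses NF).
Proof.
right; apply/In_cat; right; apply/In_cat; left; apply/In_map; exists s; split => //; exact: In_enum.
Qed.
Lemma In_cmp pq : List.In (cmp pq) (clauses NF).
Proof.
right; apply/In_cat; right; apply/In_cat; right; apply/In_cat; left; apply/In_map; exists pq.
split => //; exact: In_enum.
Qed.
Lemma In_cmpb pq : List.In (cmpb pq) (clauses NF).
Proof.
right; apply/In_cat; right; apply/In_cat; right; apply/In_cat; right; apply/In_map; exists pq.
split => //; exact: In_enum.
Qed.
Lemma In_contra : List.In contra (clauses NF).
Proof. by left. Qed.

Lemma NF_sem w : w <> [::] -> (models w NF <-> Acc (st w)).
Proof.
move=> Hw; have Hn : 1 <= size w by case: w Hw.
pose D x y := st (sub w x y).
have DS : forall x y, 1 <= x -> x < y -> y <= size w ->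
    gfun (D x.+1 y) (D x y.-1) = D x y.
  move=> x y H1 H2 H3; rewrite /D -sub_behead // -sub_init //; apply: gfunE.
  rewrite sub_size; lia.
split.
- move=> [I HI].
  have key : forall m x y, y - x = m -> 1 <= x -> x <= y -> y <= size w ->
      I (Rt (D x y)) x y /\ (~~ Acc (D x y) -> I Rbot x y).
    elim=> [|m IH] x y Hm H1 H2 H3.
    + have Exy : y = x by lia.
      subst y.
      have [s Hs] : exists s, onth w x.-1 = Some s.
        case E: (onth w x.-1) => [s|]; first by exists s.
        have : x.-1 < size w by lia.
        by rewrite -onthTE E.
      have Dx : D x x = ff s by rewrite /D (sub_one Hs).
      have hyp_ok : forall h, List.In h (hinp s) -> hsem w I x x h.
        move=> h [<-|[<-|[]]] /=; first done.
        have -> : minn (x + 0) (size w) = x by lia.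
        by rewrite Hs.
      split.
      * rewrite Dx; exact: (HI _ (In_inc s) x x H1 H2 H3 hyp_ok).
      * rewrite Dx => NA; have := HI _ (In_incb s) x x H1 H2 H3 hyp_ok.
        by rewrite /= (negbTE NA).
    + have Hxy : x < y by lia.
      have [A1 _] := IH x.+1 y ltac:(lia) ltac:(lia) ltac:(lia) H3.
      have [A2 _] := IH x y.-1 ltac:(lia) H1 ltac:(lia) ltac:(lia).
      pose pq := (D x.+1 y, D x y.-1).
      have hyp_ok : forall h, List.In h (hcmp pq) -> hsem w I x y h.
        move=> h [<-|[<-|[<-|[]]]] /=; first by [].
        * have -> : minn (x + 1) (size w) = x.+1 by lia.
          have -> : maxn (y - 0) 1 = y by lia.
          by split => //.
        * have -> : minn (x + 0) (size w) = x by lia.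
          have -> : maxn (y - 1) 1 = y.-1 by lia.
          split => //; lia.
      have G := HI _ (In_cmp pq) x y H1 H2 H3 hyp_ok.
      rewrite /cmp /pq /= DS // in G.
      split => // NA.
      have := HI _ (In_cmpb pq) x y H1 H2 H3 hyp_ok.
      by rewrite /cmpb /pq /= DS // (negbTE NA).
  have [_ K] := key (size w - 1) 1 (size w) erefl (leqnn 1) Hn (leqnn _).
  rewrite /D sub_full // in K.
  case HA: (Acc (st w)) => //.
  have IB := K (negbT HA).
  have hyp_ok : forall h, List.In h (hyps contra) -> hsem w I 1 (size w) h.
    move=> h [<-|[<-|[<-|[]]]] /=.
    - by have -> : minn (1 + 0) (size w) = 1 by lia.
    - by have -> : minn (size w + 0) (size w) = size w by lia.
    - have -> : minn (1 + 0) (size w) = 1 by lia.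
      by have -> : maxn (size w - 0) 1 = size w by lia.
  by case: (HI _ In_contra 1 (size w) (leqnn 1) Hn (leqnn _) hyp_ok).
- move=> HA.
  exists (fun R x y => R = Rt (D x y) \/ (R = Rbot /\ ~~ Acc (D x y))).
  have Dx : forall x s, onth w x.-1 = Some s -> D x x = ff s.
    by move=> x s Hs; rewrite /D (sub_one Hs).
  move=> cl [<-|Hin].
  + move=> x y H1 H2 H3 Hh.
    have E1 := Hh _ (or_introl erefl).
    have E2 := Hh _ (or_intror (or_introl erefl)).
    have E3 := Hh _ (or_intror (or_intror (or_introl erefl))).
    move: E1 E2 E3 => /=.
    have -> : minn (x + 0) (size w) = x by lia.
    have -> : minn (y + 0) (size w) = y by lia.
    have -> : maxn (y - 0) 1 = y by lia.
    move=> /eqP Ex /eqP Ey; subst x y.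
    case=> [[/esym/Rt_neq //|[_ NA]] _].
    by move: NA; rewrite /D sub_full // HA.
  move: Hin => /In_cat; rewrite !In_cat !In_map.
  case=> [[z [<- _]]|[[z [<- _]]|[[z [<- _]]|[z [<- _]]]]] x y H1 H2 H3 Hh.
  + have E1 := Hh _ (or_introl erefl).
    have E2 := Hh _ (or_intror (or_introl erefl)).
    move: E1 E2 => /= Exy; subst y.
    have -> : minn (x + 0) (size w) = x by lia.
    move=> /eqP Hs; left; by rewrite (Dx _ _ Hs).
  + have E1 := Hh _ (or_introl erefl).
    have E2 := Hh _ (or_intror (or_introl erefl)).
    move: E1 E2 => /= Exy; subst y.
    have -> : minn (x + 0) (size w) = x by lia.
    move=> /eqP Hs; rewrite /= (Dx _ _ Hs).
    by case: (boolP (Acc (ff z))) => Hz; [left | right].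
  + have E1 := Hh _ (or_introl erefl).
    have E2 := Hh _ (or_intror (or_introl erefl)).
    have E3 := Hh _ (or_intror (or_intror (or_introl erefl))).
    move: E1 E2 E3 => /= Hxy.
    have -> : minn (x + 1) (size w) = x.+1 by lia.
    have -> : maxn (y - 0) 1 = y by lia.
    have -> : minn (x + 0) (size w) = x by lia.
    have -> : maxn (y - 1) 1 = y.-1 by lia.
    case=> [[/Rt_inj E1|[/Rt_neq //]] _] [[/Rt_inj E2|[/Rt_neq //]] _].
    by left; rewrite E1 E2 DS.
  + have E1 := Hh _ (or_introl erefl).
    have E2 := Hh _ (or_intror (or_introl erefl)).
    have E3 := Hh _ (or_intror (or_intror (or_introl erefl))).
    move: E1 E2 E3 => /= Hxy.
    have -> : minn (x + 1) (size w) = x.+1 by lia.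
    have -> : maxn (y - 0) 1 = y by lia.
    have -> : minn (x + 0) (size w) = x by lia.
    have -> : maxn (y - 1) 1 = y.-1 by lia.
    case=> [[/Rt_inj E1|[/Rt_neq //]] _] [[/Rt_inj E2|[/Rt_neq //]] _].
    rewrite E1 E2 DS //.
    by case: (boolP (Acc (D x y))) => Hz; [left | right].
Qed.

End Main.

Unset Implicit Arguments.

Theorem lemma2 (Sigma : finType) (Phi : formula Sigma) :
  exists Phi' : formula Sigma,
    normal_form Phi' /\
    forall w : seq Sigma, w <> [::] -> (models w Phi <-> models w Phi').
Proof.
exists (NF Phi); split; first exact: (NF_normal Phi).
move=> w Hw.
have A := acc_iff Phi w.
have B := NF_sem Phi Hw.
move: A B; generalize (Acc (st Phi w)) => b [A1 A2] [B1 B2].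
split => H; [exact: B2 (A2 H) | exact: A1 (B1 H)].
Qed.
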